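(* Let $m,n,k,a$ be natural numbers with $n\geq 1$, $k\geq 1$, $m\geq 1$ and $1\leq a\leq 9$. Then the equation $$C_nC_{n+1}\cdots C_{n+k} = a\left(\frac{10^m-1}{9}\right)$$ has no solution. That is, no product of two or more consecutive Lucas-balancing numbers (starting from index at least $1$) is a decimal repdigit.
   Context: The Lucas-balancing sequence $(C_n)_{n\geq 0}$ is defined by $C_0=1$, $C_1=3$ and $C_{n+1}=6C_n-C_{n-1}$ for $n\geq 1$. For $1\le a\le 9$ and $m\ge 1$, the number $a\frac{10^m-1}{9}$ is the decimal integer consisting of $m$ copies of the digit $a$. *)

(* Defs.v *)
From mathcomp Require Import all_boot.
Set Implicit Arguments. Unset Strict Implicit. Unset Printing Implicit Defensive.

(* Lucas-balancing pair: (C_n, C_{n+1}), with C_0 = 1, C_1 = 3,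
   C_{n+1} = 6 C_n - C_{n-1}. The sequence is increasing, so the truncated
   subtraction on nat is exact. *)
Fixpoint lbpair (n : nat) : nat * nat :=
  match n with
  | 0 => (1, 3)
  | n'.+1 => let p := lbpair n' in (p.2, 6 * p.2 - p.1)
  end.

Definition lucas_bal (n : nat) : nat := (lbpair n).1.

Definition repdigit (a m : nat) : nat := a * ((10 ^ m - 1) %/ 9).

(* Main.v *)
Require Import Defs.
From mathcomp Require Import all_boot.
From mathcomp Require Import zify.

Lemma lb_inv n : let p := lbpair n in
  [/\ 3 * p.1 <= p.2, 3 ^ n <= p.1 &
   (p.1 %% 280 = 1 /\ p.2 %% 280 = 3) \/ (p.1 %% 280 = 3 /\ p.2 %% 280 = 17) \/
   (p.1 %% 280 = 17 /\ p.2 %% 280 = 99) \/ (p.1 %% 280 = 99 /\ p.2 %% 280 = 17) \/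
   (p.1 %% 280 = 17 /\ p.2 %% 280 = 3) \/ (p.1 %% 280 = 3 /\ p.2 %% 280 = 1)].
Proof.
elim: n => [|n [H1 H2 H3]] /=; first by split => //; left.
move: H1 H2 H3; case: (lbpair n) => x y /= H1 H2 H3.
split; first lia.
  rewrite expnS; lia.
lia.
Qed.

Lemma lb_res i : let x := lucas_bal i in
  [/\ x %% 8 \in [:: 1; 3], ~~ (5 %| x), ~~ (7 %| x) & 3 ^ i <= x].
Proof.
rewrite /lucas_bal; have [_ H2 H3] := lb_inv i; move: H2 H3.
case: (lbpair i) => x y /= H2 H3.
rewrite !inE; split => //; try lia.
Qed.

Lemma prod_res (r : seq nat) : let p := \prod_(i <- r) lucas_bal i in
  [/\ p %% 8 \in [:: 1; 3], ~~ (5 %| p) & ~~ (7 %| p)].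
Proof.
apply: (big_ind (fun p => [/\ p %% 8 \in [:: 1; 3], ~~ (5 %| p) & ~~ (7 %| p)])).
- by [].
- move=> p q [Hp1 Hp2 Hp3] [Hq1 Hq2 Hq3]; split.
  + rewrite -modnMm; move: Hp1 Hq1; rewrite !inE.
    by case/orP=> /eqP -> ; case/orP => /eqP ->.
  + by rewrite Euclid_dvdM // negb_or Hp2 Hq2.
  + by rewrite Euclid_dvdM // negb_or Hp3 Hq3.
- by move=> i _; case: (lb_res i).
Qed.

Fixpoint R (m : nat) : nat := if m is m'.+1 then 10 * R m' + 1 else 0.

Lemma R9 m : 9 * R m = 10 ^ m - 1.
Proof.
elim: m => [|m IH] //=; rewrite expnS.
have : 1 <= 10 ^ m by rewrite expn_gt0.
lia.
Qed.

Lemma repR a m : repdigit a m = a * R m.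
Proof. by rewrite /repdigit -R9 mulKn. Qed.

Lemma R3 m : R m.+3 %% 8 = 7.
Proof. rewrite /=; lia. Qed.

Theorem theorem4 (m n k a : nat) :
  1 <= n -> 1 <= k -> 1 <= m -> 1 <= a <= 9 ->
  \prod_(n <= i < n + k + 1) lucas_bal i <> repdigit a m.
Proof.
move=> Hn Hk Hm Ha.
rewrite repR => E.
have BIG : 51 = \prod_(n <= i < n + k + 1) lucas_bal i \/
           243 <= \prod_(n <= i < n + k + 1) lucas_bal i.
  rewrite big_ltn; last lia.
  rewrite big_ltn; last lia.
  have Zpos : 0 < \prod_(n.+2 <= i < n + k + 1) lucas_bal i.
    apply: prodn_gt0 => i; have [_ _ _] := lb_res i.
    by move: (expn_gt0 3 i) => /= H1 H2; apply: leq_trans H2.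
  have [_ _ _ HX] := lb_res n; have [_ _ _ HY] := lb_res n.+1.
  clear E; case: n Hn HX HY Zpos => [|[|n]] // _ HX HY Zpos.
  - clear Zpos; case: k Hk => [|[|k]] // _.
      by left; rewrite big_geq.
    right; rewrite big_ltn; last lia.
    have -> : lucas_bal 1 = 3 by [].
    have -> : lucas_bal 2 = 17 by [].
    have -> : lucas_bal 3 = 99 by [].
    set W := \prod_(_ <= _ < _) _.
    have : 0 < W.
      apply: prodn_gt0 => i; have [_ _ _] := lb_res i.
      by move: (expn_gt0 3 i) => /= H1 H2; apply: leq_trans H2.
    lia.
  - right; rewrite mulnA.
    have H9 : 9 <= lucas_bal n.+2.
      apply: leq_trans HX; rewrite !expnS; move: (expn_gt0 3 n); lia.
    have H27 : 27 <= lucas_bal n.+3.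
      apply: leq_trans HY; rewrite !expnS; move: (expn_gt0 3 n); lia.
    have := leq_mul H9 H27; have := leq_mul (leq_mul H9 H27) Zpos.
    lia.
have [P1 P2 P3] := prod_res (index_iota n (n + k + 1)).
rewrite -/(\prod_(n <= i < n + k + 1) lucas_bal i) E in P1 P2 P3.
rewrite !inE in P1.
have Ha5 : a <> 5 by move=> a5; move: P2; rewrite a5 dvdn_mulr.
have Ha7 : a <> 7 by move=> a7; move: P3; rewrite a7 dvdn_mulr.
clear P2 P3.
case: m Hm E P1 => [|[|[|m]]] // _ E P1.
- move: BIG; rewrite E /=; lia.
- move: BIG; rewrite E /=; lia.
- move: P1; rewrite -modnMm R3; case/orP => /eqP; lia.
Qed.
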